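(* The moment generating function $M(z)=\sum_{n\ge0}m_nz^n$ of the standard V-monotone Gaussian distribution (with moments $m_{2k}=|\mathcal{OV}^2(2k)|/k!=P_k(1)$, $m_{2k+1}=0$) satisfies, for $z\in(-\tfrac12,\tfrac12)$, $M(0)=1$ and $$M(z)=\Big[S\Big(\frac{1}{\sqrt{1-2z^2}}\Big)\Big]^{-1}\quad (z\neq0).$$
   Context: $T(t)=\int_t^1\frac{s\,ds}{s^2-s+1}=-\tfrac12\log(t^2-t+1)-\tfrac{\sqrt3}{3}\big[\arctan\big(\tfrac{2t-1}{\sqrt3}\big)-\tfrac{\pi}{6}\big]$. The function $t\mapsto e^{T(t)}$ is a strictly decreasing bijection from $[0,\infty)$ onto $(0,e^{\sqrt3\pi/9}]$, and $S:(0,e^{\sqrt3\pi/9}]\to[0,\infty)$ denotes its inverse. The polynomials $P_n$ are defined by $Q_0=P_0=1$, $Q_{n+1}(x)=\sum_{m=0}^n[\int_x^1Q_m]Q_{n-m}(x)$, $P_{n+1}(x)=\sum_{m=0}^n[\int_0^xP_m+\int_x^1Q_m]P_{n-m}(x)$ on $[0,1]$. $\mathcal{OV}^2(2k)$: non-crossing pair partitions of $[2k]$ with a bijective labeling by $[k]$ such that along every chain of successively nearest outer blocks the labels are strictly decreasing then strictly increasing. *)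

(* Defs.v *)
From Stdlib Require Import Reals Lra List ClassicalEpsilon.
Import ListNotations.
Open Scope R_scope.

(** Polynomials as coefficient lists (constant term first). *)
Definition poly := list R.

Fixpoint padd (p q : poly) : poly :=
  match p, q with
  | [], _ => q
  | _, [] => p
  | a :: p', b :: q' => (a + b) :: padd p' q'
  end.

Definition pscale (c : R) (p : poly) : poly := map (Rmult c) p.

Fixpoint pmul (p q : poly) : poly :=
  match p with
  | [] => []
  | a :: p' => padd (pscale a q) (0 :: pmul p' q)
  end.

Fixpoint peval (p : poly) (x : R) : R :=
  match p with
  | [] => 0
  | a :: p' => a + x * peval p' x
  end.

Fixpoint pint_aux (k : nat) (p : poly) : poly :=
  match p with
  | [] => []
  | a :: p' => (a / INR (S k)) :: pint_aux (S k) p'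
  end.

(** x |-> \int_0^x p *)
Definition pint0x (p : poly) : poly := 0 :: pint_aux 0 p.

(** x |-> \int_x^1 p *)
Definition pintx1 (p : poly) : poly :=
  padd [peval (pint0x p) 1] (pscale (-1) (pint0x p)).

Definition psum (f : nat -> poly) (n : nat) : poly :=
  fold_right (fun m acc => padd (f m) acc) [] (seq 0 (S n)).

Definition Qnext (l : list poly) (n : nat) : poly :=
  psum (fun m => pmul (pintx1 (nth m l [])) (nth (n - m) l [])) n.

Fixpoint Qlist (n : nat) : list poly :=
  match n with
  | O => [[1]]
  | S n' => Qlist n' ++ [Qnext (Qlist n') n']
  end.

Definition Qpoly (n : nat) : poly := nth n (Qlist n) [].

Definition Pnext (ql pl : list poly) (n : nat) : poly :=
  psum (fun m => pmul (padd (pint0x (nth m pl [])) (pintx1 (nth m ql [])))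
                      (nth (n - m) pl [])) n.

Fixpoint Plist (n : nat) : list poly :=
  match n with
  | O => [[1]]
  | S n' => Plist n' ++ [Pnext (Qlist n') (Plist n') n']
  end.

Definition Ppoly (n : nat) : poly := nth n (Plist n) [].

Definition vmoment (n : nat) : R :=
  if Nat.even n then peval (Ppoly (Nat.div2 n)) 1 else 0.

(** T(t) = \int_t^1 s/(s^2-s+1) ds, in the closed form given in the paper. *)
Definition Tfun (t : R) : R :=
  - / 2 * ln (t ^ 2 - t + 1)
  - sqrt 3 / 3 * (atan ((2 * t - 1) / sqrt 3) - PI / 6).

(** S : inverse of t |-> exp (T t) on [0, +oo). *)
Definition Sinv (y : R) : R :=
  epsilon (inhabits 0) (fun t => 0 <= t /\ exp (Tfun t) = y).

(* Main.v *)
Require Import Defs.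
From Stdlib Require Import Reals Lra Lia List ClassicalEpsilon FunctionalExtensionality.
From Coquelicot Require Import Coquelicot.
Import ListNotations.
Open Scope R_scope.

Lemma peval_padd : forall p q x, peval (padd p q) x = peval p x + peval q x.
Proof.
  induction p as [|a p IH]; intros q x; simpl.
  - lra.
  - destruct q as [|b q]; simpl. lra. rewrite IH. ring.
Qed.

Lemma peval_pscale : forall c p x, peval (pscale c p) x = c * peval p x.
Proof.
  induction p as [|a p IH]; intros x; simpl. ring. unfold pscale in IH. rewrite IH. ring.
Qed.

Lemma peval_pmul : forall p q x, peval (pmul p q) x = peval p x * peval q x.
Proof.
  induction p as [|a p IH]; intros q x; simpl. ring.
  rewrite peval_padd, peval_pscale. simpl. rewrite IH. ring.
Qed.

Lemma fold_seq_eval : forall (f : nat -> list R) x k s,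
  peval (fold_right (fun m acc => padd (f m) acc) [] (seq s (S k))) x =
  sum_f_R0 (fun i => peval (f (s + i)%nat) x) k.
Proof.
  intros f x k. induction k as [|k IH]; intros s.
  - simpl. rewrite peval_padd. simpl. rewrite Nat.add_0_r. ring.
  - rewrite seq_S. rewrite fold_right_app. 
    replace (fold_right (fun m acc => padd (f m) acc) [] [(s + S k)%nat])
      with (padd (f (s + S k)%nat) []) by reflexivity.
    assert (G: forall l r, peval (fold_right (fun m acc => padd (f m) acc) r l) x =
       peval (fold_right (fun m acc => padd (f m) acc) [] l) x + peval r x).
    { induction l as [|y l IHl]; intros r; simpl. lra.
      rewrite !peval_padd, IHl. ring. }
    rewrite G. rewrite IH. simpl sum_f_R0. rewrite peval_padd. simpl. ring.
Qed.

Lemma peval_psum : forall f n x, peval (psum f n) x = sum_f_R0 (fun m => peval (f m) x) n.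
Proof. intros. unfold psum. apply fold_seq_eval. Qed.

Lemma ex_derive_peval : forall p x, ex_derive (peval p) x.
Proof.
  induction p as [|a p IH]; intros x; simpl.
  - apply ex_derive_const.
  - apply (ex_derive_plus (fun _ => a) (fun y => y * peval p y)).
    apply ex_derive_const. apply ex_derive_mult. apply ex_derive_id. apply IH.
Qed.

Lemma is_derive_cst : forall (c x : R), is_derive (fun _ => c) x 0.
Proof. intros. apply is_derive_Reals. apply derivable_pt_lim_const. Qed.

Lemma is_derive_xpow : forall (n : nat) (x : R), is_derive (fun y => y ^ n) x (INR n * x ^ (Init.Nat.pred n)).
Proof. intros. apply is_derive_Reals. apply derivable_pt_lim_pow. Qed.

Lemma pint_aux_derive : forall p k x,
  is_derive (fun y => y ^ (S k) * peval (pint_aux k p) y) x (x ^ k * peval p x).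
Proof.
  induction p as [|a p IH]; intros k x; simpl.
  - apply (is_derive_ext (fun _ => 0)). intros; simpl; ring.
    replace (x ^ k * 0) with 0 by ring. apply is_derive_cst.
  - apply (is_derive_ext (fun y => a / INR (S k) * y ^ (S k) + y ^ (S (S k)) * peval (pint_aux (S k) p) y)).
    { intros y; simpl. ring. }
    replace (x ^ k * (a + x * peval p x)) with
      (a / INR (S k) * (INR (S k) * x ^ (Init.Nat.pred (S k))) + x ^ (S k) * peval p x).
    2:{ assert (HK: INR (S k) <> 0) by (apply not_0_INR; lia).
        change (Init.Nat.pred (S k)) with k. change (x ^ S k) with (x * x ^ k). field. exact HK. }
    apply (is_derive_plus (fun y => a / INR (S k) * y ^ (S k))).
    + apply is_derive_scal. apply is_derive_xpow.
    + apply (IH (S k)).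
Qed.

Lemma pint0x_derive : forall p x, is_derive (fun y => peval (pint0x p) y) x (peval p x).
Proof.
  intros p x. apply (is_derive_ext (fun y => y ^ 1 * peval (pint_aux 0 p) y)).
  { intros y. unfold pint0x. simpl. ring. }
  replace (peval p x) with (x ^ 0 * peval p x) by (simpl; ring).
  apply pint_aux_derive.
Qed.

Lemma pint0x_0 : forall p, peval (pint0x p) 0 = 0.
Proof. intros. unfold pint0x. simpl. ring. Qed.

Lemma peval_pintx1 : forall p x, peval (pintx1 p) x = peval (pint0x p) 1 - peval (pint0x p) x.
Proof.
  intros. unfold pintx1. rewrite peval_padd, peval_pscale. simpl. ring.
Qed.

Lemma pintx1_derive : forall p x, is_derive (fun y => peval (pintx1 p) y) x (- peval p x).
Proof.
  intros p x. apply (is_derive_ext (fun y => peval (pint0x p) 1 - peval (pint0x p) y)).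
  { intros y. rewrite peval_pintx1. reflexivity. }
  replace (- peval p x) with (0 - peval p x) by ring.
  apply (is_derive_minus (fun _ => peval (pint0x p) 1)). apply is_derive_cst. apply pint0x_derive.
Qed.

Lemma pintx1_1 : forall p, peval (pintx1 p) 1 = 0.
Proof. intros. rewrite peval_pintx1. ring. Qed.

Lemma Qlist_len : forall n, length (Qlist n) = S n.
Proof. induction n; simpl; auto. rewrite length_app, IHn. simpl. lia. Qed.

Lemma Plist_len : forall n, length (Plist n) = S n.
Proof. induction n; simpl; auto. rewrite length_app, IHn. simpl. lia. Qed.

Lemma Qlist_nth : forall n m, (m <= n)%nat -> nth m (Qlist n) [] = Qpoly m.
Proof.
  induction n as [|n IH]; intros m Hm.
  - assert (m = 0%nat) by lia. subst. reflexivity.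
  - destruct (Nat.eq_dec m (S n)) as [->|Hne]. reflexivity.
    simpl. rewrite app_nth1. apply IH; lia. rewrite Qlist_len. lia.
Qed.

Lemma Plist_nth : forall n m, (m <= n)%nat -> nth m (Plist n) [] = Ppoly m.
Proof.
  induction n as [|n IH]; intros m Hm.
  - assert (m = 0%nat) by lia. subst. reflexivity.
  - destruct (Nat.eq_dec m (S n)) as [->|Hne]. reflexivity.
    simpl. rewrite app_nth1. apply IH; lia. rewrite Plist_len. lia.
Qed.

Lemma Qpoly_S : forall n, Qpoly (S n) = Qnext (Qlist n) n.
Proof.
  intros. unfold Qpoly. simpl. rewrite app_nth2; rewrite Qlist_len. 2: lia.
  rewrite Nat.sub_diag. reflexivity.
Qed.

Lemma Ppoly_S : forall n, Ppoly (S n) = Pnext (Qlist n) (Plist n) n.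
Proof.
  intros. unfold Ppoly. simpl. rewrite app_nth2; rewrite Plist_len. 2: lia.
  rewrite Nat.sub_diag. reflexivity.
Qed.

Definition q (n : nat) (x : R) := peval (Qpoly n) x.
Definition p (n : nat) (x : R) := peval (Ppoly n) x.
Definition A (n : nat) (x : R) := peval (pintx1 (Qpoly n)) x.
Definition B (n : nat) (x : R) := peval (pint0x (Ppoly n)) x.

Lemma q0 : forall x, q 0 x = 1.
Proof. intros. unfold q, Qpoly. simpl. ring. Qed.
Lemma p0 : forall x, p 0 x = 1.
Proof. intros. unfold p, Ppoly. simpl. ring. Qed.

Lemma sum_eq_le : forall (f g : nat -> R) n, (forall i, (i <= n)%nat -> f i = g i) ->
  sum_f_R0 f n = sum_f_R0 g n.
Proof.
  intros f g n H. induction n as [|n IH]; simpl. apply H; lia.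
  rewrite IH. rewrite H. reflexivity. lia. intros; apply H; lia.
Qed.

Lemma qS : forall n x, q (S n) x = sum_f_R0 (fun m => A m x * q (n - m) x) n.
Proof.
  intros. unfold q at 1. rewrite Qpoly_S. unfold Qnext. rewrite peval_psum.
  apply sum_eq_le. intros i Hi. rewrite peval_pmul.
  rewrite !Qlist_nth by lia. reflexivity.
Qed.

Lemma pS : forall n x, p (S n) x = sum_f_R0 (fun m => (B m x + A m x) * p (n - m) x) n.
Proof.
  intros. unfold p at 1. rewrite Ppoly_S. unfold Pnext. rewrite peval_psum.
  apply sum_eq_le. intros i Hi. rewrite peval_pmul, peval_padd.
  rewrite Qlist_nth, !Plist_nth by lia. reflexivity.
Qed.

Lemma A_deriv : forall m x, is_derive (A m) x (- q m x).
Proof. intros. apply pintx1_derive. Qed.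
Lemma B_deriv : forall m x, is_derive (B m) x (p m x).
Proof. intros. apply pint0x_derive. Qed.
Lemma A_1 : forall m, A m 1 = 0.
Proof. intros. apply pintx1_1. Qed.
Lemma B_0 : forall m, B m 0 = 0.
Proof. intros. apply pint0x_0. Qed.

Lemma q_1 : forall n, q (S n) 1 = 0.
Proof.
  intros. rewrite qS. rewrite (sum_eq_le _ (fun _ => 0)).
  - clear. induction n; simpl; [ring| rewrite IHn; ring].
  - intros. rewrite A_1. ring.
Qed.

Lemma ex_derive_q : forall n x, ex_derive (q n) x.
Proof. intros. apply ex_derive_peval. Qed.
Lemma ex_derive_p : forall n x, ex_derive (p n) x.
Proof. intros. apply ex_derive_peval. Qed.

Lemma is_derive_sum : forall (F : nat -> R -> R) (dF : nat -> R) x n,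
  (forall m, (m <= n)%nat -> is_derive (F m) x (dF m)) ->
  is_derive (fun y => sum_f_R0 (fun m => F m y) n) x (sum_f_R0 dF n).
Proof.
  intros F dF x n H. induction n as [|n IH]; simpl.
  - apply H; lia.
  - apply (is_derive_plus (fun y => sum_f_R0 (fun m => F m y) n) (F (S n))).
    apply IH. intros; apply H; lia. apply H; lia.
Qed.

Lemma dq_S : forall n x, Derive (q (S n)) x =
  sum_f_R0 (fun m => - q m x * q (n - m) x + A m x * Derive (q (n - m)) x) n.
Proof.
  intros. apply is_derive_unique.
  apply (is_derive_ext (fun y => sum_f_R0 (fun m => A m y * q (n - m) y) n)).
  { intros; rewrite qS; reflexivity. }
  apply (is_derive_sum (fun m y => A m y * q (n - m) y)).
  intros m _. apply (is_derive_mult (A m) (q (n-m))).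
  apply A_deriv. apply Derive_correct, ex_derive_q. intros; apply Rmult_comm.
Qed.

Lemma dp_S : forall n x, Derive (p (S n)) x =
  sum_f_R0 (fun m => (p m x - q m x) * p (n - m) x + (B m x + A m x) * Derive (p (n - m)) x) n.
Proof.
  intros. apply is_derive_unique.
  apply (is_derive_ext (fun y => sum_f_R0 (fun m => (B m y + A m y) * p (n - m) y) n)).
  { intros; rewrite pS; reflexivity. }
  apply (is_derive_sum (fun m y => (B m y + A m y) * p (n - m) y)).
  intros m _. apply (is_derive_mult (fun y => B m y + A m y) (p (n-m))).
  replace (p m x - q m x) with (p m x + - q m x) by ring.
  apply (is_derive_plus (B m) (A m)). apply B_deriv. apply A_deriv.
  apply Derive_correct, ex_derive_p. intros; apply Rmult_comm.
Qed.

Lemma dq0 : forall x, Derive (q 0) x = 0.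
Proof. intros. apply is_derive_unique. apply (is_derive_ext (fun _ => 1)). intros; rewrite q0; auto. apply is_derive_cst. Qed.
Lemma dp0 : forall x, Derive (p 0) x = 0.
Proof. intros. apply is_derive_unique. apply (is_derive_ext (fun _ => 1)). intros; rewrite p0; auto. apply is_derive_cst. Qed.

Definition prev (f : nat -> R) (k : nat) : R := match k with O => 0 | S j => f j end.
Definition delta (m : nat) : R := match m with O => 1 | S _ => 0 end.

Lemma sum_zero : forall n, sum_f_R0 (fun _ => 0) n = 0.
Proof. induction n; simpl; [ring | rewrite IHn; ring]. Qed.

Lemma sum_scal_l : forall (c : R) (f : nat -> R) n,
  sum_f_R0 (fun i => c * f i) n = c * sum_f_R0 f n.
Proof. intros. induction n; simpl. ring. rewrite IHn. ring. Qed.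

Lemma sum_split_first : forall (f : nat -> R) n,
  sum_f_R0 f (S n) = f 0%nat + sum_f_R0 (fun i => f (S i)) n.
Proof.
  intros f n. induction n as [|n IH].
  - simpl. ring.
  - rewrite tech5. rewrite IH. simpl. ring.
Qed.

Lemma sum_delta : forall (u : nat -> R) n, sum_f_R0 (fun m => delta m * u (n - m)%nat) n = u n.
Proof.
  intros u [|n]. simpl; ring.
  rewrite sum_split_first. simpl delta. rewrite (sum_eq_le _ (fun _ => 0)).
  rewrite sum_zero, Nat.sub_0_r. ring. intros; ring.
Qed.

Lemma sum_cross : forall (u U : nat -> R) n,
  (forall k, u (S k) = sum_f_R0 (fun m => U m * u (k - m)%nat) k) ->
  sum_f_R0 (fun m => (2 * INR m - 1) * prev U m * u (n - m)%nat
      + (2 * INR (n - m) - 1) * U m * prev u (n - m)%nat) n = 2 * INR n * u n.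
Proof.
  intros u U [|n] Hrec.
  - simpl. ring.
  - rewrite sum_plus. rewrite sum_split_first. simpl prev at 1.
    rewrite tech5. replace (S n - S n)%nat with 0%nat by lia. simpl prev at 3.
    rewrite (sum_eq_le (fun m => (2 * INR (S n - m) - 1) * U m * prev u (S n - m)%nat)
         (fun m => (2 * INR n - 2 * INR m + 1) * U m * u (n - m)%nat)).
    2:{ intros i Hi. replace (S n - i)%nat with (S (n - i)) by lia. simpl prev.
        rewrite S_INR, minus_INR by lia. ring. }
    rewrite (sum_eq_le (fun i => (2 * INR (S i) - 1) * prev U (S i) * u (S n - S i)%nat)
         (fun m => (2 * INR m + 1) * U m * u (n - m)%nat)).
    2:{ intros i Hi. simpl prev. replace (S n - S i)%nat with (n - i)%nat by lia.
        rewrite S_INR. ring. }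
    transitivity (sum_f_R0 (fun m : nat => (2 * INR m + 1) * U m * u (n - m)%nat) n +
      sum_f_R0 (fun m : nat => (2 * INR n - 2 * INR m + 1) * U m * u (n - m)%nat) n). ring.
    rewrite <- sum_plus.
    rewrite (sum_eq_le _ (fun m => (2 * INR (S n)) * (U m * u (n - m)%nat))).
    2:{ intros. rewrite S_INR. ring. }
    rewrite sum_scal_l. rewrite <- Hrec. ring.
Qed.

Lemma alg : forall (x : R) (u du U dU : nat -> R) n,
  (forall k, u (S k) = sum_f_R0 (fun m => U m * u (k - m)%nat) k) ->
  du (S n) = sum_f_R0 (fun m => dU m * u (n - m)%nat + U m * du (n - m)%nat) n ->
  (forall m, (m <= n)%nat -> x * dU m = INR (S m) * U m - (2 * INR m - 1) * prev U m - delta m) ->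
  (forall k, (k <= n)%nat -> x * du k = INR k * u k - (2 * INR k - 1) * prev u k) ->
  x * du (S n) = INR (S n) * u (S n) - (2 * INR (S n) - 1) * u n.
Proof.
  intros x u du U dU n Hrec Hd HU IH.
  rewrite Hd, scal_sum.
  rewrite (sum_eq_le _ (fun m => INR (S n) * (U m * u (n - m)%nat) - delta m * u (n-m)%nat
      - ((2 * INR m - 1) * prev U m * u (n - m)%nat
      + (2 * INR (n - m) - 1) * U m * prev u (n - m)%nat))).
  2:{ intros i Hi. 
      transitivity ((x * dU i) * u (n - i)%nat + U i * (x * du (n - i)%nat)). ring.
      rewrite HU by lia. rewrite IH by lia. rewrite !S_INR, minus_INR by lia. ring. }
  rewrite !minus_sum. rewrite sum_scal_l, <- Hrec, sum_delta, sum_cross by exact Hrec.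
  rewrite S_INR. ring.
Qed.

Lemma deriv0_const : forall F : R -> R, (forall y, is_derive F y 0) -> forall a b, F a = F b.
Proof.
  intros F H a b.
  destruct (MVT_gen F a b (fun _ => 0)) as [c [_ Hc]].
  - intros; apply H.
  - intros y _. apply derivable_continuous_pt. exists 0. apply is_derive_Reals, H.
  - lra.
Qed.

Definition PDE (u : nat -> R -> R) (k : nat) (x : R) :=
  x * Derive (u k) x = INR k * u k x - (2 * INR k - 1) * prev (fun j => u j x) k.

Lemma prevA_deriv : forall m y, is_derive (fun z => prev (fun k => A k z) m) y (- prev (fun k => q k y) m).
Proof.
  intros [|m] y; simpl. replace (-0) with 0 by ring. apply is_derive_cst. apply A_deriv.
Qed.
Lemma prevB_deriv : forall m y, is_derive (fun z => prev (fun k => B k z) m) y (prev (fun k => p k y) m).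
Proof.
  intros [|m] y; simpl. apply is_derive_cst. apply B_deriv.
Qed.

Lemma q_1_delta : forall m, q m 1 = delta m.
Proof. intros [|m]. apply q0. apply q_1. Qed.

Lemma is_derive_lin : forall (f1 f2 f3 : R -> R) d1 d2 d3 c1 c2 c3 c4 x,
  is_derive f1 x d1 -> is_derive f2 x d2 -> is_derive f3 x d3 ->
  is_derive (fun y => c1 * f1 y + c2 * f2 y + c3 * f3 y + c4) x (c1*d1 + c2*d2 + c3*d3).
Proof.
  intros f1 f2 f3 d1 d2 d3 c1 c2 c3 c4 x H1 H2 H3.
  auto_derive.
  - repeat split; eexists; eauto.
  - rewrite <- (is_derive_unique _ _ _ H1), <- (is_derive_unique _ _ _ H2), <- (is_derive_unique _ _ _ H3).
    rewrite !Rmult_1_l. reflexivity.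
Qed.

Lemma is_derive_xmul : forall (f : R -> R) x, ex_derive f x ->
  is_derive (fun y => y * f y) x (f x + x * Derive f x).
Proof.
  intros f x H. auto_derive. auto. rewrite !Rmult_1_l. reflexivity.
Qed.

Lemma HU_A : forall m, (forall y, PDE q m y) -> forall x,
  x * (- q m x) = INR (S m) * A m x - (2 * INR m - 1) * prev (fun k => A k x) m - delta m.
Proof.
  intros m Hm x.
  set (E := fun y => (-1) * (y * q m y) + (- INR (S m)) * A m y + (2 * INR m - 1) * prev (fun k => A k y) m + delta m).
  assert (HE : forall y, is_derive E y 0).
  { intros y. unfold E.
    pose proof (Hm y) as H. unfold PDE in H.
    replace 0 with ((-1) * (q m y + y * Derive (q m) y) + (- INR (S m)) * (- q m y) +
        (2 * INR m - 1) * (- prev (fun k => q k y) m)) by (rewrite S_INR; lra).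
    apply is_derive_lin. apply is_derive_xmul, ex_derive_q. apply A_deriv. apply prevA_deriv. }
  pose proof (deriv0_const E HE x 1) as H1. unfold E in H1.
  rewrite A_1, q_1_delta in H1. 
  assert (prev (fun k => A k 1) m = 0) by (destruct m; simpl; auto using A_1).
  rewrite H in H1. lra.
Qed.

Lemma HU_B : forall m, (forall y, PDE p m y) -> forall x,
  x * p m x = INR (S m) * B m x - (2 * INR m - 1) * prev (fun k => B k x) m.
Proof.
  intros m Hm x.
  set (E := fun y => 1 * (y * p m y) + (- INR (S m)) * B m y + (2 * INR m - 1) * prev (fun k => B k y) m + 0).
  assert (HE : forall y, is_derive E y 0).
  { intros y. unfold E.
    pose proof (Hm y) as H. unfold PDE in H.
    replace 0 with (1 * (p m y + y * Derive (p m) y) + (- INR (S m)) * (p m y) +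
        (2 * INR m - 1) * (prev (fun k => p k y) m)) at 1 by (rewrite S_INR; lra).
    apply is_derive_lin. apply is_derive_xmul, ex_derive_p. apply B_deriv. apply prevB_deriv. }
  pose proof (deriv0_const E HE x 0) as H1. unfold E in H1.
  rewrite B_0 in H1.
  assert (prev (fun k => B k 0) m = 0) by (destruct m; simpl; auto using B_0).
  rewrite H in H1. lra.
Qed.

Lemma PDE_q_all : forall n k, (k <= n)%nat -> forall x, PDE q k x.
Proof.
  induction n as [|n IH]; intros k Hk x.
  - assert (k = 0%nat) by lia. subst. unfold PDE. rewrite dq0. simpl. ring.
  - destruct (Nat.eq_dec k (S n)) as [->|Hne]. 2: apply IH; lia.
    unfold PDE. simpl prev.
    apply (alg x (fun k => q k x) (fun k => Derive (q k) x) (fun k => A k x) (fun k => - q k x) n).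
    + intros; apply qS.
    + apply dq_S.
    + intros m Hm. apply HU_A. intros y; apply IH; lia.
    + intros k Hk'. apply IH. exact Hk'.
Qed.

Lemma PDE_p_all : forall n k, (k <= n)%nat -> forall x, PDE p k x.
Proof.
  induction n as [|n IH]; intros k Hk x.
  - assert (k = 0%nat) by lia. subst. unfold PDE. rewrite dp0. simpl. ring.
  - destruct (Nat.eq_dec k (S n)) as [->|Hne]. 2: apply IH; lia.
    unfold PDE. simpl prev.
    apply (alg x (fun k => p k x) (fun k => Derive (p k) x) (fun k => B k x + A k x) (fun k => p k x - q k x) n).
    + intros; apply pS.
    + apply dp_S.
    + intros m Hm. 
      pose proof (HU_B m (fun y => IH m ltac:(lia) y) x) as H1.
      pose proof (HU_A m (fun y => PDE_q_all m m (le_n _) y) x) as H2.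
      assert (prev (fun k => B k x + A k x) m = prev (fun k => B k x) m + prev (fun k => A k x) m)
        by (destruct m; simpl; ring).
      rewrite H. lra.
    + intros k Hk'. apply IH. exact Hk'.
Qed.

Notation cv := PS_mult.

Lemma sum_rev : forall (f : nat -> R) n, sum_f_R0 f n = sum_f_R0 (fun k => f (n - k)%nat) n.
Proof.
  intros f n. revert f. induction n as [|n IH]; intros f.
  - simpl. reflexivity.
  - rewrite sum_split_first. rewrite (IH (fun k => f (S k))).
    rewrite tech5. rewrite Nat.sub_diag. 
    rewrite (sum_eq_le (fun k => f (S (n - k))) (fun k => f (S n - k)%nat)).
    ring. intros i Hi. f_equal. lia.
Qed.

Lemma sum_nonneg_le : forall (f : nat -> R) n, (forall k, (k <= n)%nat -> 0 <= f k) -> 0 <= sum_f_R0 f n.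
Proof.
  intros f n H. induction n; simpl. apply H; lia.
  apply Rplus_le_le_0_compat. apply IHn; intros; apply H; lia. apply H; lia.
Qed.

Lemma cv_comm : forall u v, cv u v = cv v u.
Proof.
  intros u v. apply functional_extensionality. intros n. unfold PS_mult.
  rewrite sum_rev. apply sum_eq_le. intros i Hi. replace (n - (n - i))%nat with i by lia. ring.
Qed.

Lemma tri : forall (g : nat -> nat -> R) n,
  sum_f_R0 (fun m => sum_f_R0 (fun k => g k (m - k)%nat) m) n =
  sum_f_R0 (fun k => sum_f_R0 (fun j => g k j) (n - k)) n.
Proof.
  intros g n. induction n as [|n IH].
  - simpl. reflexivity.
  - rewrite tech5. rewrite IH. rewrite (tech5 (fun k => sum_f_R0 (fun j => g k j) (S n - k))). rewrite Nat.sub_diag.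
    rewrite (sum_eq_le (fun k => sum_f_R0 (fun j => g k j) (S n - k))
       (fun k => sum_f_R0 (fun j => g k j) (n - k) + g k (S n - k)%nat) n).
    2:{ intros i Hi. replace (S n - i)%nat with (S (n - i)) by lia. reflexivity. }
    rewrite sum_plus. rewrite tech5. simpl. rewrite Nat.sub_diag. ring.
Qed.

Lemma cv_assoc : forall u v w, cv (cv u v) w = cv u (cv v w).
Proof.
  intros u v w. apply functional_extensionality. intros n. unfold PS_mult.
  rewrite (sum_eq_le _ (fun m => sum_f_R0 (fun k => (fun k j => u k * v j * w (n - k - j)%nat) k (m - k)%nat) m)).
  2:{ intros m Hm. rewrite Rmult_comm, scal_sum. apply sum_eq_le. intros k Hk. cbv beta.
      replace (n - k - (m - k))%nat with (n - m)%nat by lia. ring. }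
  etransitivity. apply (tri (fun k j => u k * v j * w (n - k - j)%nat)).
  apply sum_eq_le. intros k Hk. rewrite <- sum_scal_l. 
  apply sum_eq_le. intros; cbv beta. ring.
Qed.

Lemma cv_plus_l : forall u v w, cv (fun n => u n + v n) w = (fun n => cv u w n + cv v w n).
Proof.
  intros. apply functional_extensionality. intros n. unfold PS_mult.
  rewrite <- sum_plus. apply sum_eq_le. intros; ring.
Qed.

Lemma cv_delta_l : forall u, cv delta u = u.
Proof.
  intros. apply functional_extensionality. intros n. unfold PS_mult. apply sum_delta.
Qed.

Lemma cv_prev_l : forall u v, cv (prev u) v = prev (cv u v).
Proof.
  intros. apply functional_extensionality. intros [|n]; unfold PS_mult.
  - simpl. ring.
  - rewrite sum_split_first. simpl prev. rewrite Rmult_0_l, Rplus_0_l.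
    apply sum_eq_le. intros; reflexivity.
Qed.

Lemma cv_nonneg : forall u v n, (forall k, (k <= n)%nat -> 0 <= u k) -> (forall k, (k <= n)%nat -> 0 <= v k) ->
  0 <= cv u v n.
Proof.
  intros u v n Hu Hv. unfold PS_mult. apply sum_nonneg_le. intros k Hk.
  apply Rmult_le_pos. apply Hu; lia. apply Hv; lia.
Qed.

Definition a (n : nat) : R := p n 1.
Definition beta (n : nat) : R := B n 1.
Definition dd (n : nat) : R := Derive (p n) 1.
Definition a' (n : nat) : R := a n - delta n.
Definition cc : nat -> R := cv (cv a a) a'.

Lemma a_0 : a 0 = 1.
Proof. apply p0. Qed.

Lemma a_S : forall n, a (S n) = cv beta a n.
Proof.
  intros. unfold a. rewrite pS. unfold PS_mult. apply sum_eq_le. intros. unfold beta. rewrite A_1. ring_simplify. reflexivity.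
Qed.

Lemma dd_S : forall n, dd (S n) = cv a' a n + cv beta dd n.
Proof.
  intros. unfold dd. rewrite dp_S. unfold PS_mult. rewrite <- sum_plus. apply sum_eq_le. intros.
  rewrite A_1, q_1_delta. unfold a', a, beta, dd. ring.
Qed.

Lemma dd_0 : dd 0 = 0.
Proof. apply dp0. Qed.

Lemma F1 : prev (cv beta a) = a'.
Proof.
  apply functional_extensionality. intros [|n]; simpl; unfold a'.
  - rewrite a_0. simpl. ring.
  - rewrite a_S. simpl. ring.
Qed.

Lemma a_decomp : a = (fun n => delta n + a' n).
Proof. apply functional_extensionality. intros; unfold a'. ring. Qed.

Lemma cc_eq : cc = (fun n => cv a' a n + cv beta (prev cc) n).
Proof.
  assert (E1: cv beta (prev cc) = cv a' (cv a a')).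
  { rewrite cv_comm. rewrite cv_prev_l. unfold cc.
    rewrite (cv_comm _ beta). rewrite cv_assoc. rewrite <- (cv_assoc beta a).
    rewrite <- cv_prev_l. rewrite F1. reflexivity. }
  rewrite E1. unfold cc.
  assert (E2: cv a a = (fun n => a n + cv a a' n)).
  { replace (cv a a) with (cv (fun n => delta n + a' n) a) by (rewrite <- a_decomp; reflexivity).
    rewrite cv_plus_l, cv_delta_l, (cv_comm a' a). reflexivity. }
  rewrite E2. rewrite cv_plus_l. rewrite (cv_comm a' a). rewrite (cv_comm a' (cv a a')). reflexivity.
Qed.

Lemma dd_eq : forall n, dd n = prev cc n.
Proof.
  assert (H : forall n k, (k <= n)%nat -> dd k = prev cc k).
  { induction n as [|n IH]; intros k Hk.
    - assert (k = 0%nat) by lia; subst. rewrite dd_0. reflexivity.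
    - destruct (Nat.eq_dec k (S n)) as [->|]; [|apply IH; lia].
      rewrite dd_S. simpl prev. rewrite cc_eq. f_equal. unfold PS_mult. apply sum_eq_le.
      intros i Hi. rewrite IH by lia. reflexivity. }
  intros n; apply (H n); lia.
Qed.

Lemma star : forall n, INR (S n) * a (S n) = (2 * INR n + 1) * a n + cc n.
Proof.
  intros n. pose proof (PDE_p_all (S n) (S n) (le_n _) 1) as H. unfold PDE in H.
  fold (dd (S n)) in H. rewrite Rmult_1_l in H. rewrite dd_eq in H. simpl prev in H.
  unfold a. rewrite S_INR in *. lra.
Qed.

Lemma a_nonneg_all : forall n k, (k <= n)%nat -> 0 <= a k /\ 0 <= a' k.
Proof.
  induction n as [|n IH]; intros k Hk.
  - assert (k = 0%nat) by lia; subst. unfold a'. rewrite a_0. simpl. lra.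
  - destruct (Nat.eq_dec k (S n)) as [->|]; [|apply IH; lia].
    assert (Hc : 0 <= cc n).
    { unfold cc. apply cv_nonneg. intros j Hj. apply cv_nonneg; intros; apply IH; lia.
      intros; apply IH; lia. }
    pose proof (star n) as Hs. destruct (IH n (le_n _)) as [Han _].
    assert (0 <= a (S n)).
    { assert (0 < INR (S n)) by (apply lt_0_INR; lia).
      assert (0 <= INR n) by apply pos_INR.
      apply Rmult_le_reg_l with (INR (S n)). lra. rewrite Rmult_0_r. rewrite Hs.
      apply Rplus_le_le_0_compat; [apply Rmult_le_pos; lra | exact Hc]. }
    unfold a'. simpl delta. lra.
Qed.

Lemma a_nonneg : forall k, 0 <= a k.
Proof. intros; apply (a_nonneg_all k k); lia. Qed.
Lemma a'_nonneg : forall k, 0 <= a' k.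
Proof. intros; apply (a_nonneg_all k k); lia. Qed.
Lemma cc_nonneg : forall n, 0 <= cc n.
Proof. intros. unfold cc. apply cv_nonneg; intros. apply cv_nonneg; intros; apply a_nonneg. apply a'_nonneg. Qed.

Lemma tpos : forall t, 0 < t ^ 2 - t + 1. Proof. intros. nra. Qed.
Lemma sqrt3_pos : 0 < sqrt 3. Proof. apply sqrt_lt_R0. lra. Qed.
Lemma Tfun_deriv : forall t, is_derive Tfun t (- t / (t ^ 2 - t + 1)).
Proof.
  intros t. unfold Tfun.
  auto_derive.
  - pose proof (tpos t). simpl in H. lra.
  - pose proof sqrt3_pos as Hs0. pose proof (sqrt_sqrt 3 ltac:(lra)) as Hs.
    pose proof (tpos t) as Ht.
    set (s := sqrt 3) in *.
    replace (/ (1 + (2 * t + - (1)) * / s * ((2 * t + - (1)) * / s * 1))) with (3 / (4 * (t^2 - t + 1))).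
    2:{ field_simplify; try (replace (s ^ 2) with 3 by (rewrite <- Hs; ring)); try field; repeat split; simpl in Ht; nra. }
    simpl in Ht. field. split; lra.
Qed.

Lemma atan_inv_sqrt3 : atan (1 / sqrt 3) = PI / 6.
Proof.
  rewrite <- tan_PI6. apply atan_tan. pose proof PI_RGT_0. lra.
Qed.

Lemma Tfun_1 : Tfun 1 = 0.
Proof.
  unfold Tfun. replace (1 ^ 2 - 1 + 1) with 1 by ring. rewrite ln_1.
  replace ((2 * 1 - 1) / sqrt 3) with (1 / sqrt 3) by (field; apply Rgt_not_eq, sqrt3_pos).
  rewrite atan_inv_sqrt3. ring.
Qed.

Lemma Tfun_0 : Tfun 0 = sqrt 3 * PI / 9.
Proof.
  unfold Tfun. replace (0 ^ 2 - 0 + 1) with 1 by ring. rewrite ln_1.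
  replace ((2 * 0 - 1) / sqrt 3) with (- (1 / sqrt 3)) by (field; apply Rgt_not_eq, sqrt3_pos).
  rewrite atan_opp, atan_inv_sqrt3. field.
Qed.

Lemma Tfun_cont : forall t, continuity_pt Tfun t.
Proof.
  intros t. apply derivable_continuous_pt. exists (- t / (t ^ 2 - t + 1)). apply is_derive_Reals, Tfun_deriv.
Qed.

Lemma Tfun_strict_decr : forall s t, 0 <= s -> s < t -> Tfun t < Tfun s.
Proof.
  intros s t Hs Hst.
  destruct (MVT_gen Tfun s t (fun c => - c / (c ^ 2 - c + 1))) as [c [Hc Heq]].
  - intros; apply Tfun_deriv.
  - intros; apply Tfun_cont.
  - rewrite Rmin_left in Hc by lra. rewrite Rmax_right in Hc by lra.
    assert (0 < c ^ 2 - c + 1) by apply tpos.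
    destruct (Req_dec c 0) as [->|Hc0].
    + (* c = 0 endpoint; use a second MVT on [s/2 ...] *)
      assert (s = 0) by lra. subst s.
      destruct (MVT_gen Tfun (t/2) t (fun c => - c / (c ^ 2 - c + 1))) as [c2 [Hc2 Heq2]].
      * intros; apply Tfun_deriv.
      * intros; apply Tfun_cont.
      * rewrite Rmin_left in Hc2 by lra. rewrite Rmax_right in Hc2 by lra.
        assert (0 < c2 ^ 2 - c2 + 1) by apply tpos.
        assert (Tfun t < Tfun (t/2)).
        { assert (0 < c2 / (c2 ^ 2 - c2 + 1)) by (apply Rdiv_lt_0_compat; lra).
          replace (- c2 / (c2 ^ 2 - c2 + 1)) with (- (c2 / (c2 ^ 2 - c2 + 1))) in Heq2 by (field; lra).
          nra. }
        destruct (MVT_gen Tfun 0 (t/2) (fun c => - c / (c ^ 2 - c + 1))) as [c3 [Hc3 Heq3]].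
        -- intros; apply Tfun_deriv.
        -- intros; apply Tfun_cont.
        -- rewrite Rmin_left in Hc3 by lra. rewrite Rmax_right in Hc3 by lra.
           assert (0 < c3 ^ 2 - c3 + 1) by apply tpos.
           assert (0 <= c3 / (c3 ^ 2 - c3 + 1)) by (apply Rdiv_le_0_compat; lra).
           replace (- c3 / (c3 ^ 2 - c3 + 1)) with (- (c3 / (c3 ^ 2 - c3 + 1))) in Heq3 by (field; lra).
           nra.
    + assert (0 < c / (c ^ 2 - c + 1)) by (apply Rdiv_lt_0_compat; lra).
      replace (- c / (c ^ 2 - c + 1)) with (- (c / (c ^ 2 - c + 1))) in Heq by (field; lra).
      nra.
Qed.

Lemma Tfun_lower : forall t, 0 <= t <= 1 -> Tfun t >= Tfun 0 - 4 / 3 * t * t.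
Proof.
  intros t Ht. destruct (Req_dec t 0) as [->|Ht0]. lra.
  destruct (MVT_gen Tfun 0 t (fun c => - c / (c ^ 2 - c + 1))) as [c [Hc Heq]].
  - intros; apply Tfun_deriv.
  - intros; apply Tfun_cont.
  - rewrite Rmin_left in Hc by lra. rewrite Rmax_right in Hc by lra.
    assert (3/4 <= c ^ 2 - c + 1) by (pose proof (pow2_ge_0 (c - 1/2)); simpl in *; nra).
    assert (c / (c ^ 2 - c + 1) <= 4/3 * c).
    { apply Rmult_le_reg_r with (c ^ 2 - c + 1). lra.
      unfold Rdiv. rewrite Rmult_assoc, Rinv_l by lra. nra. }
    replace (- c / (c ^ 2 - c + 1)) with (- (c / (c ^ 2 - c + 1))) in Heq by (field; lra).
    assert (0 <= c / (c ^ 2 - c + 1)) by (apply Rdiv_le_0_compat; lra).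
    nra.
Qed.

Lemma PI_gt_3 : 3 < PI.
Proof. pose proof PI2_3_2. lra. Qed.

Lemma sqrt3_gt : 1.7 < sqrt 3.
Proof.
  assert (sqrt (1.7 * 1.7) = 1.7) by (apply sqrt_square; lra).
  rewrite <- H. apply sqrt_lt_1_alt. lra.
Qed.

Lemma Tfun_big : forall t, 0 <= t <= 1/100 -> 1/2 < Tfun t.
Proof.
  intros t Ht. pose proof (Tfun_lower t ltac:(lra)). rewrite Tfun_0 in H.
  pose proof PI_gt_3. pose proof sqrt3_gt.
  assert (sqrt 3 * PI > 1.7 * 3) by nra. nra.
Qed.

Lemma ln_lt_1_2 : ln 2 < 1.
Proof.
  rewrite <- ln_exp. apply ln_increasing. lra.
  pose proof (exp_ineq1 1 ltac:(lra)). lra.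
Qed.

Ltac pownn := first [ apply pow_le | apply Rmult_le_pos; [ | apply pow_le] ].

Definition sN (N : nat) (w : R) : R := sum_f_R0 (fun n => a n * w ^ n) N.

Lemma sum_le_le : forall (f g : nat -> R) n, (forall k, (k <= n)%nat -> f k <= g k) ->
  sum_f_R0 f n <= sum_f_R0 g n.
Proof.
  intros f g n H. induction n; simpl. apply H; lia.
  apply Rplus_le_compat. apply IHn; intros; apply H; lia. apply H; lia.
Qed.

Lemma sN_ge1 : forall N w, 0 <= w -> 1 <= sN N w.
Proof.
  intros N w Hw. unfold sN. induction N; simpl.
  - rewrite a_0. lra.
  - assert (0 <= a (S N) * (w * w ^ N)) by (apply Rmult_le_pos; [apply a_nonneg | pownn; lra]).
    lra.
Qed.

Lemma term_le_sN : forall n w, 0 <= w -> a n * w ^ n <= sN n w.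
Proof.
  intros n w Hw. unfold sN. destruct n; simpl. lra.
  assert (0 <= sum_f_R0 (fun n0 => a n0 * w ^ n0) n).
  { apply sum_nonneg_le. intros; apply Rmult_le_pos; [apply a_nonneg | pownn; lra]. }
  lra.
Qed.

Lemma cauchy_le : forall (u v : nat -> R) N w, (forall n, 0 <= u n) -> (forall n, 0 <= v n) -> 0 <= w ->
  sum_f_R0 (fun n => cv u v n * w ^ n) N <=
  sum_f_R0 (fun n => u n * w ^ n) N * sum_f_R0 (fun n => v n * w ^ n) N.
Proof.
  intros u v N w Hu Hv Hw. destruct N as [|N].
  - simpl. unfold PS_mult. simpl. lra.
  - rewrite (cauchy_finite (fun n => u n * w ^ n) (fun n => v n * w ^ n) (S N) ltac:(lia)).
    assert (E : sum_f_R0 (fun n => cv u v n * w ^ n) (S N) =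
       sum_f_R0 (fun k => sum_f_R0 (fun p => u p * w ^ p * (v (k - p)%nat * w ^ (k - p))) k) (S N)).
    { apply sum_eq_le. intros k Hk. unfold PS_mult. rewrite (Rmult_comm _ (w ^ k)), scal_sum.
      apply sum_eq_le. intros i Hi.
      replace (w ^ k) with (w ^ i * w ^ (k - i)) by (rewrite <- pow_add; f_equal; lia). ring. }
    rewrite E.
    assert (0 <= sum_f_R0 (fun k => sum_f_R0 (fun l => u (S (l + k)) * w ^ S (l + k) * (v (S N - l)%nat * w ^ (S N - l))) (Init.Nat.pred (S N - k))) (Init.Nat.pred (S N))).
    { apply cond_pos_sum. intros k. apply cond_pos_sum. intros l.
      apply Rmult_le_pos; apply Rmult_le_pos; auto; pownn; lra. }
    lra.
Qed.

Definition dsN (N : nat) (w : R) : R := sum_f_R0 (fun n => a n * (INR n * w ^ (Init.Nat.pred n))) N.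

Lemma sN_deriv : forall N w, is_derive (sN N) w (dsN N w).
Proof.
  intros. unfold sN, dsN. apply (is_derive_sum (fun n y => a n * y ^ n)).
  intros m _. apply is_derive_scal. apply is_derive_xpow.
Qed.

Lemma w_dsN : forall N w, w * dsN N w = sum_f_R0 (fun n => INR n * a n * w ^ n) N.
Proof.
  intros. unfold dsN. rewrite <- sum_scal_l. apply sum_eq_le. intros [|k] _.
  - simpl. ring.
  - simpl pred. simpl pow. ring.
Qed.

Definition CN (N : nat) (w : R) := sum_f_R0 (fun n => cc n * w ^ n) N.

Lemma key_ineq0 : forall N w, 0 <= w ->
  (1 - 2 * w) * (w * dsN N w) <= w * (sN N w + CN N w).
Proof.
  intros N w Hw. rewrite w_dsN.
  assert (Hg : forall n, 0 <= INR n * a n * w ^ n).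
  { intros. apply Rmult_le_pos. apply Rmult_le_pos. apply pos_INR. apply a_nonneg. pownn; lra. }
  assert (Hsn : forall M, 0 <= sN M w) by (intros; pose proof (sN_ge1 M w Hw); lra).
  assert (Hcn : forall M, 0 <= CN M w).
  { intros. apply sum_nonneg_le. intros. apply Rmult_le_pos. apply cc_nonneg. pownn; lra. }
  destruct N as [|M].
  - simpl. rewrite Rmult_0_l, Rmult_0_l, Rmult_0_r. specialize (Hsn 0%nat). specialize (Hcn 0%nat).
    apply Rmult_le_pos; lra.
  - set (Y := sum_f_R0 (fun n => INR n * a n * w ^ n) M).
    assert (HX : sum_f_R0 (fun n => INR n * a n * w ^ n) (S M) = w * (2 * Y + sN M w + CN M w)).
    { rewrite sum_split_first. simpl (INR 0). rewrite !Rmult_0_l, Rplus_0_l.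
      rewrite (sum_eq_le _ (fun n => w * (2 * (INR n * a n * w ^ n) + a n * w ^ n + cc n * w ^ n))).
      2:{ intros k Hk. transitivity (INR (S k) * a (S k) * w * w ^ k). simpl; ring.
          rewrite star. ring. }
      rewrite sum_scal_l. unfold Y, sN, CN. rewrite !sum_plus. rewrite sum_scal_l. ring. }
    assert (HXY : Y <= sum_f_R0 (fun n => INR n * a n * w ^ n) (S M)).
    { unfold Y. simpl. specialize (Hg (S M)). simpl in Hg. lra. }
    assert (Hs : sN M w <= sN (S M) w).
    { unfold sN. simpl. assert (0 <= a (S M) * (w * w ^ M)) by (apply Rmult_le_pos; [apply a_nonneg|pownn; lra]). lra. }
    assert (Hc : CN M w <= CN (S M) w).
    { unfold CN. simpl. assert (0 <= cc (S M) * (w * w ^ M)) by (apply Rmult_le_pos; [apply cc_nonneg|pownn; lra]). lra. }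
    rewrite HX in *. nra.
Qed.

Lemma CN_bound : forall N w, 0 <= w -> CN N w <= sN N w * sN N w * (sN N w - 1).
Proof.
  intros N w Hw. unfold CN, cc.
  eapply Rle_trans. apply cauchy_le.
  - intros; apply cv_nonneg; intros; apply a_nonneg.
  - apply a'_nonneg.
  - exact Hw.
  - assert (E : sum_f_R0 (fun n => a' n * w ^ n) N = sN N w - 1).
    { unfold sN, a'. transitivity (sum_f_R0 (fun n => a n * w ^ n) N - sum_f_R0 (fun n => delta n * w ^ n) N).
      rewrite <- minus_sum. apply sum_eq_le; intros; ring.
      f_equal. destruct N. simpl; ring. rewrite sum_split_first. simpl.
      rewrite (sum_eq_le _ (fun _ => 0)). rewrite sum_zero. ring. intros; simpl; ring. }
    rewrite E. pose proof (sN_ge1 N w Hw).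
    apply Rmult_le_compat_r. lra.
    apply (cauchy_le a a N w a_nonneg a_nonneg Hw).
Qed.

Lemma diff_ineq : forall N w, 0 < w ->
  (1 - 2 * w) * dsN N w <= sN N w - sN N w ^ 2 + sN N w ^ 3.
Proof.
  intros N w Hw. pose proof (key_ineq0 N w ltac:(lra)). pose proof (CN_bound N w ltac:(lra)).
  assert ((1 - 2 * w) * dsN N w <= sN N w + CN N w).
  { apply Rmult_le_reg_l with w. lra. nra. }
  simpl. nra.
Qed.

Lemma is_derive_eq : forall (f : R -> R) (x d d' : R), is_derive f x d -> @eq R d d' -> is_derive f x d'.
Proof. intros; subst; auto. Qed.

Lemma Phi_deriv : forall y, 0 < y -> is_derive (fun z => Tfun (/ z)) y (/ (y * (1 - y + y ^ 2))).
Proof.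
  intros y Hy.
  assert (Hd : is_derive (fun z => / z) y (- / y ^ 2)).
  { auto_derive. lra. field. lra. }
  pose proof (is_derive_comp Tfun (fun z => / z) y _ _ (Tfun_deriv (/ y)) Hd) as H.
  eapply is_derive_eq. exact H.
  assert (0 < 1 - y + y ^ 2) by (pose proof (tpos y); nra).
  change (scal (- / y ^ 2) (- / y / ((/ y) ^ 2 - / y + 1))) with ((- / y ^ 2) * (- / y / ((/ y) ^ 2 - / y + 1))).
  field. split; lra.
Qed.

Definition Psi (F : R -> R) (w : R) := Tfun (/ F w) + / 2 * ln (1 - 2 * w).

Lemma Psi_deriv : forall (F : R -> R) dF w, is_derive F w dF -> 0 < F w -> w < 1/2 ->
  is_derive (Psi F) w (dF / (F w * (1 - F w + F w ^ 2)) - / (1 - 2 * w)).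
Proof.
  intros F dF w HF Hpos Hw. unfold Psi.
  pose proof (is_derive_comp (fun z => Tfun (/ z)) F w _ _ (Phi_deriv (F w) Hpos) HF) as H1.
  assert (H2 : is_derive (fun y : R => / 2 * ln (1 - 2 * y)) w (- / (1 - 2 * w))).
  { auto_derive. lra. field. lra. }
  pose proof (is_derive_plus _ _ w _ _ H1 H2) as H3.
  eapply is_derive_eq. exact H3.
  change (plus (scal dF (/ (F w * (1 - F w + F w ^ 2)))) (- / (1 - 2 * w)))
    with (dF * (/ (F w * (1 - F w + F w ^ 2))) + (- / (1 - 2 * w))).
  unfold Rdiv. ring.
Qed.

Lemma Psi_mono : forall (F dF : R -> R) w0, 0 < w0 < 1/2 ->
  (forall w, 0 <= w <= w0 -> is_derive F w (dF w) /\ 0 < F w) ->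
  (forall w, 0 < w < w0 -> (1 - 2 * w) * dF w <= F w - F w ^ 2 + F w ^ 3) ->
  Psi F w0 <= Psi F 0.
Proof.
  intros F dF w0 Hw0 HD Hineq.
  destruct (MVT_cor2 (Psi F) (fun w => dF w / (F w * (1 - F w + F w ^ 2)) - / (1 - 2 * w)) 0 w0) as [c [Heq Hc]].
  - lra.
  - intros x Hx. destruct (HD x ltac:(lra)).
    apply is_derive_Reals. apply Psi_deriv; auto; lra.
  - assert (Hle : dF c / (F c * (1 - F c + F c ^ 2)) - / (1 - 2 * c) <= 0).
    { destruct (HD c ltac:(lra)) as [_ Hp]. specialize (Hineq c Hc).
      assert (0 < 1 - F c + F c ^ 2) by (pose proof (tpos (F c)); nra).
      assert (0 < F c * (1 - F c + F c ^ 2)) by (apply Rmult_lt_0_compat; lra).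
      assert (0 < 1 - 2 * c) by lra.
      apply Rle_minus. unfold Rdiv. 
      apply Rmult_le_reg_l with ((F c * (1 - F c + F c ^ 2)) * (1 - 2 * c)). nra.
      replace (F c * (1 - F c + F c ^ 2) * (1 - 2 * c) * (dF c * / (F c * (1 - F c + F c ^ 2))))
        with ((1 - 2 * c) * dF c) by (field; lra).
      replace (F c * (1 - F c + F c ^ 2) * (1 - 2 * c) * / (1 - 2 * c))
        with (F c * (1 - F c + F c ^ 2)) by (field; lra).
      simpl in *. nra. }
    nra.
Qed.

Lemma Psi_const : forall (F dF : R -> R) w0, 0 < w0 < 1/2 ->
  (forall w, 0 <= w <= w0 -> is_derive F w (dF w) /\ 0 < F w) ->
  (forall w, 0 < w < w0 -> (1 - 2 * w) * dF w = F w - F w ^ 2 + F w ^ 3) ->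
  Psi F w0 = Psi F 0.
Proof.
  intros F dF w0 Hw0 HD Hineq.
  destruct (MVT_cor2 (Psi F) (fun w => dF w / (F w * (1 - F w + F w ^ 2)) - / (1 - 2 * w)) 0 w0) as [c [Heq Hc]].
  - lra.
  - intros x Hx. destruct (HD x ltac:(lra)).
    apply is_derive_Reals. apply Psi_deriv; auto; lra.
  - assert (Hle : dF c / (F c * (1 - F c + F c ^ 2)) - / (1 - 2 * c) = 0).
    { destruct (HD c ltac:(lra)) as [_ Hp]. specialize (Hineq c Hc).
      assert (0 < 1 - F c + F c ^ 2) by (pose proof (tpos (F c)); nra).
      assert (0 < 1 - 2 * c) by lra.
      replace (dF c) with ((F c - F c ^ 2 + F c ^ 3) / (1 - 2 * c)) by (field_simplify_eq; lra).
      field. split; lra. }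
    rewrite Hle in Heq. lra.
Qed.

Lemma sN_at0 : forall N, sN N 0 = 1.
Proof.
  intros N. unfold sN. induction N; simpl. rewrite a_0; ring. rewrite IHN. ring.
Qed.

Lemma ln_gt_m1 : forall w, 0 <= w < 1/4 -> - 1 < ln (1 - 2 * w).
Proof.
  intros w Hw. assert (ln (/ 2) < ln (1 - 2 * w)) by (apply ln_increasing; lra).
  rewrite ln_Rinv in H by lra. pose proof ln_lt_1_2. lra.
Qed.

Lemma sN_bound : forall N w, 0 <= w < 1/4 -> sN N w <= 100.
Proof.
  intros N w Hw. destruct (Req_dec w 0) as [->|Hw0]. rewrite sN_at0; lra.
  pose proof (Psi_mono (sN N) (dsN N) w ltac:(lra)) as H.
  assert (HP : Psi (sN N) w <= Psi (sN N) 0).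
  { apply H.
    - intros x Hx. split. apply sN_deriv. pose proof (sN_ge1 N x ltac:(lra)); lra.
    - intros x Hx. apply diff_ineq; lra. }
  unfold Psi in HP. rewrite sN_at0 in HP. replace (1 - 2 * 0) with 1 in HP by ring.
  rewrite Rinv_1, Tfun_1, ln_1 in HP.
  pose proof (ln_gt_m1 w Hw).
  destruct (Rle_lt_dec (sN N w) 100) as [|Hbig]; auto.
  exfalso. pose proof (Tfun_big (/ sN N w)) as HT.
  assert (0 < / sN N w) by (apply Rinv_0_lt_compat; lra).
  assert (/ sN N w <= 1/100).
  { replace (1/100) with (/ 100) by field. apply Rinv_le_contravar; lra. }
  specialize (HT ltac:(lra)). lra.
Qed.

Lemma rad_of_bound : forall u, (forall r, 0 <= r < 1/4 -> exists M, forall n, Rabs (u n * r ^ n) <= M) ->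
  forall w, 0 <= w < 1/4 -> Rbar_lt (Rabs w) (CV_radius u).
Proof.
  intros u H w Hw. set (r := (w + 1/4) / 2).
  destruct (CV_radius_bounded u) as [Hub _].
  assert (Hr : Rbar_le r (CV_radius u)).
  { apply Hub. apply H. unfold r; lra. }
  rewrite Rabs_pos_eq by lra.
  destruct (CV_radius u) as [R| |]; simpl in *; auto; unfold r in Hr; lra.
Qed.

Lemma rad_a : forall w, 0 <= w < 1/4 -> Rbar_lt (Rabs w) (CV_radius a).
Proof.
  apply rad_of_bound. intros r Hr. exists 100. intros n.
  rewrite Rabs_pos_eq by (apply Rmult_le_pos; [apply a_nonneg | apply pow_le; lra]).
  eapply Rle_trans. apply term_le_sN. lra. apply sN_bound. lra.
Qed.

Lemma rad_a' : forall w, 0 <= w < 1/4 -> Rbar_lt (Rabs w) (CV_radius a').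
Proof.
  apply rad_of_bound. intros r Hr. exists 100. intros n.
  rewrite Rabs_pos_eq by (apply Rmult_le_pos; [apply a'_nonneg | apply pow_le; lra]).
  apply Rle_trans with (a n * r ^ n).
  { apply Rmult_le_compat_r. apply pow_le; lra. unfold a'. destruct n; simpl; lra. }
  eapply Rle_trans. apply term_le_sN. lra. apply sN_bound. lra.
Qed.

Lemma rad_aa : forall w, 0 <= w < 1/4 -> Rbar_lt (Rabs w) (CV_radius (cv a a)).
Proof.
  apply rad_of_bound. intros r Hr. exists (100 * 100). intros n.
  assert (Hnn : forall k, 0 <= cv a a k * r ^ k).
  { intros; apply Rmult_le_pos; [apply cv_nonneg; intros; apply a_nonneg | apply pow_le; lra]. }
  rewrite Rabs_pos_eq by apply Hnn.
  apply Rle_trans with (sum_f_R0 (fun k => cv a a k * r ^ k) n).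
  { destruct n; simpl. lra. assert (0 <= sum_f_R0 (fun k => cv a a k * r ^ k) n) by (apply sum_nonneg_le; intros; apply Hnn). lra. }
  eapply Rle_trans. apply cauchy_le; try apply a_nonneg; lra.
  fold (sN n r). pose proof (sN_bound n r Hr). pose proof (sN_ge1 n r ltac:(lra)). nra.
Qed.

Definition f (w : R) := PSeries a w.

Lemma f_lim : forall w, 0 <= w < 1/4 -> Un_cv (fun N => sN N w) (f w).
Proof.
  intros w Hw. unfold f.
  pose proof (PSeries_correct a w (CV_radius_inside a w (rad_a w Hw))) as H.
  unfold is_pseries in H. apply is_series_Reals in H.
  unfold infinite_sum, Un_cv in *. intros eps He. destruct (H eps He) as [N HN].
  exists N. intros n Hn. specialize (HN n Hn).
  replace (sN n w) with (sum_f_R0 (fun k => scal (pow_n w k) (a k)) n). auto.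
  unfold sN. apply sum_eq_le. intros. rewrite pow_n_pow. apply Rmult_comm.
Qed.

Lemma f_ge1 : forall w, 0 <= w < 1/4 -> 1 <= f w.
Proof.
  intros w Hw. apply Rle_cv_lim with (Un := fun _ => 1) (Vn := fun N => sN N w).
  intros; apply sN_ge1; lra.
  intros e He. exists 0%nat. intros. unfold Rdist. rewrite Rminus_diag, Rabs_R0. auto.
  apply f_lim; auto.
Qed.

Definition df (w : R) := PSeries (PS_derive a) w.

Lemma f_deriv : forall w, 0 <= w < 1/4 -> is_derive f w (df w).
Proof. intros. apply is_derive_PSeries. apply rad_a; auto. Qed.

Lemma is_pseries_val : forall (u : nat -> R) (x l l' : R), is_pseries u x l -> l = l' -> is_pseries u x l'.
Proof. intros; subst; auto. Qed.

Lemma f_ode : forall w, 0 < w < 1/4 -> (1 - 2 * w) * df w = f w - f w ^ 2 + f w ^ 3.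
Proof.
  intros w Hw. assert (Hw' : 0 <= w < 1/4) by lra.
  set (F := f w). set (D := df w).
  assert (HD : is_pseries (PS_derive a) w D).
  { apply PSeries_correct. apply ex_pseries_derive. apply rad_a; auto. }
  assert (HF : is_pseries a w F).
  { apply PSeries_correct. apply CV_radius_inside. apply rad_a; auto. }
  assert (HI : is_pseries (PS_incr_1 (PS_derive a)) w (w * D)).
  { apply (is_pseries_incr_1 _ _ _ HD). }
  assert (Ha' : is_pseries a' w (F - 1)).
  { assert (H1 := is_pseries_decr_1 a w (/ w) F ltac:(change (/ w * w = 1); field; lra) HF).
    assert (H2 := is_pseries_incr_1 _ _ _ H1).
    eapply is_pseries_ext. 2: eapply is_pseries_val. 2: exact H2.
    - intros [|n]; simpl; unfold a'; simpl. rewrite a_0. change (0 = 1 - 1 :> R). ring.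
      unfold PS_decr_1. change (a (S n) = a (S n) - 0 :> R). ring.
    - change (w * (/ w * (F + - a 0%nat)) = F - 1). rewrite a_0. field. lra. }
  assert (Haa : is_pseries (cv a a) w (F * F)).
  { apply is_pseries_mult; auto; apply rad_a; auto. }
  assert (Hcc : is_pseries cc w (F * F * (F - 1))).
  { apply is_pseries_mult; auto. apply rad_aa; auto. apply rad_a'; auto. }
  assert (Hcomb : is_pseries (PS_plus (PS_scal 2 (PS_incr_1 (PS_derive a))) (PS_plus a cc)) w
     (2 * (w * D) + (F + F * F * (F - 1)))).
  { apply (is_pseries_plus _ _ w (2 * (w * D)) (F + F * F * (F - 1))).
    apply (is_pseries_scal 2 _ w (w * D)). change (w * 2 = 2 * w). ring. exact HI.
    apply (is_pseries_plus _ _ w F (F * F * (F - 1))); auto. }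
  assert (Hcomb' : is_pseries (PS_derive a) w (2 * (w * D) + (F + F * F * (F - 1)))).
  { eapply is_pseries_ext. 2: exact Hcomb. intros n.
    unfold PS_plus, PS_scal, PS_derive. change (plus ?x ?y) with (x + y). change (scal ?x ?y) with (x * y).
    destruct n as [|n]; cbn [PS_incr_1]; repeat change (plus ?x ?y) with (x + y).
    - change (@zero R_NormedModule) with 0. pose proof (star 0). simpl INR in *. lra.
    - pose proof (star (S n)). rewrite !S_INR in *. lra. }
  pose proof (is_pseries_unique _ _ _ HD) as E1. pose proof (is_pseries_unique _ _ _ Hcomb') as E2.
  rewrite E1 in E2. simpl. nra.
Qed.

Lemma f_0 : f 0 = 1.
Proof. unfold f. rewrite PSeries_0. apply a_0. Qed.

Lemma T_f : forall w, 0 <= w < 1/4 -> Tfun (/ f w) = - / 2 * ln (1 - 2 * w).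
Proof.
  intros w Hw. destruct (Req_dec w 0) as [->|Hw0].
  - rewrite f_0, Rinv_1, Tfun_1. replace (1 - 2 * 0) with 1 by ring. rewrite ln_1. ring.
  - assert (H := Psi_const f df w ltac:(lra)).
    assert (E : Psi f w = Psi f 0).
    { apply H.
      - intros x Hx. split. apply f_deriv; lra. pose proof (f_ge1 x ltac:(lra)); lra.
      - intros x Hx. apply f_ode; lra. }
    unfold Psi in E. rewrite f_0, Rinv_1, Tfun_1 in E. replace (1 - 2 * 0) with 1 in E by ring.
    rewrite ln_1 in E. lra.
Qed.

Lemma exp_half_ln : forall x, 0 < x -> exp (- / 2 * ln x) = / sqrt x.
Proof.
  intros x Hx.
  assert (Hs : sqrt x = exp (/ 2 * ln x)).
  { apply sqrt_lem_1. lra. left; apply exp_pos.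
    rewrite <- exp_plus. replace (/ 2 * ln x + / 2 * ln x) with (ln x) by field. apply exp_ln; auto. }
  rewrite Hs. replace (- / 2 * ln x) with (- (/ 2 * ln x)) by ring. apply exp_Ropp.
Qed.

Lemma Sinv_f : forall w, 0 <= w < 1/4 -> Sinv (/ sqrt (1 - 2 * w)) = / f w.
Proof.
  intros w Hw.
  set (y := / sqrt (1 - 2 * w)).
  assert (Hex : exists t, 0 <= t /\ exp (Tfun t) = y).
  { exists (/ f w). split. left; apply Rinv_0_lt_compat. pose proof (f_ge1 w Hw); lra.
    rewrite T_f by auto. apply exp_half_ln. lra. }
  pose proof (epsilon_spec (inhabits 0) (fun t => 0 <= t /\ exp (Tfun t) = y) Hex) as [H1 H2].
  unfold Sinv. fold y. set (t1 := epsilon (inhabits 0) (fun t => 0 <= t /\ exp (Tfun t) = y)) in *.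
  assert (Ht0 : 0 <= / f w) by (left; apply Rinv_0_lt_compat; pose proof (f_ge1 w Hw); lra).
  assert (E : Tfun t1 = Tfun (/ f w)).
  { apply exp_inv. rewrite H2. rewrite T_f by auto. unfold y. symmetry. apply exp_half_ln. lra. }
  destruct (Rtotal_order t1 (/ f w)) as [Hl|[He|Hg]]; auto.
  - pose proof (Tfun_strict_decr t1 (/ f w) H1 Hl). lra.
  - pose proof (Tfun_strict_decr (/ f w) t1 Ht0 Hg). lra.
Qed.

Lemma even_facts : forall k, Nat.even (2 * k) = true /\ Nat.even (S (2 * k)) = false /\ Nat.div2 (2 * k) = k.
Proof.
  intros k. assert (H1 : Nat.even (2 * k) = true) by (apply Nat.even_spec; exists k; lia).
  split; auto. split.
  - rewrite Nat.even_succ, <- Nat.negb_even, H1. reflexivity.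
  - apply Nat.div2_double.
Qed.

Lemma vm_partial : forall z k,
  sum_f_R0 (fun n => vmoment n * z ^ n) (2 * k) = sN k (z ^ 2) /\
  sum_f_R0 (fun n => vmoment n * z ^ n) (S (2 * k)) = sN k (z ^ 2).
Proof.
  intros z k. induction k as [|k [IH1 IH2]].
  - unfold vmoment, sN; simpl; unfold a, p; replace (peval (Ppoly 0) 1) with 1 by (exact (eq_sym (p0 1))); split; ring.
  - assert (Hs : sum_f_R0 (fun n => vmoment n * z ^ n) (2 * S k) = sN (S k) (z ^ 2)).
    { replace (2 * S k)%nat with (S (S (2 * k))) by lia. rewrite tech5. rewrite IH2.
      unfold sN. rewrite tech5. f_equal. unfold vmoment.
      destruct (even_facts (S k)) as [E1 [_ E3]].
      replace (2 * S k)%nat with (S (S (2 * k))) in E1, E3 by lia. rewrite E1, E3.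
      unfold a, p. rewrite <- pow_mult. f_equal. f_equal. lia. }
    split; auto. rewrite tech5, Hs. unfold vmoment. destruct (even_facts (S k)) as [_ [E2 _]].
    rewrite E2. ring.
Qed.

Lemma vm_sum : forall z n, sum_f_R0 (fun n => vmoment n * z ^ n) n = sN (Nat.div2 n) (z ^ 2).
Proof.
  intros z n. rewrite (Nat.div2_odd n) at 1. destruct (Nat.odd n); simpl Nat.b2n.
  - rewrite Nat.add_1_r. apply vm_partial.
  - rewrite Nat.add_0_r. apply vm_partial.
Qed.

Lemma vm_series : forall z, -(1/2) < z < 1/2 ->
  infinite_sum (fun n => vmoment n * z ^ n) (f (z ^ 2)).
Proof.
  intros z Hz. assert (Hw : 0 <= z ^ 2 < 1/4) by (simpl; nra).
  pose proof (f_lim _ Hw) as H. unfold infinite_sum. intros eps He.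
  destruct (H eps He) as [N HN]. exists (2 * N)%nat. intros n Hn.
  rewrite vm_sum. apply HN. pose proof (Nat.div2_odd n). destruct (Nat.odd n); simpl Nat.b2n in *; lia.
Qed.

Theorem mainTheorem4 :
  infinite_sum (fun n => vmoment n * 0 ^ n) 1 /\
  (forall z : R, -(1/2) < z < 1/2 -> z <> 0 ->
     infinite_sum (fun n => vmoment n * z ^ n)
                  (/ Sinv (/ sqrt (1 - 2 * z ^ 2)))).
Proof.
  split.
  - replace 1 with (f (0 ^ 2)). apply vm_series. lra. simpl. rewrite Rmult_0_l. apply f_0.
  - intros z Hz _. assert (Hw : 0 <= z ^ 2 < 1/4) by (simpl; nra).
    rewrite Sinv_f by auto. rewrite Rinv_inv. apply vm_series; auto.
Qed.
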